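(* The logic $\mathsf{ICK}\oplus((p\to q)\to(p\mathrel{\Box\!\!\!\rightarrow} q))$ is sound and complete with respect to the class of conditional frames $(X,\leq,\mathcal{R})$ satisfying $R_a[x]\subseteq{\uparrow}x\cap a$ for all $x\in X$ and all upsets $a$.
   Context: Formulas: $\phi ::= p\mid\bot\mid\phi\wedge\phi\mid\phi\vee\phi\mid\phi\to\phi\mid\phi\mathrel{\Box\!\!\!\rightarrow}\phi$. $\mathsf{ICK}\oplus\Gamma$ is the smallest set containing intuitionistic propositional logic, $\Gamma$, $(p\mathrel{\Box\!\!\!\rightarrow}(q\wedge r))\leftrightarrow((p\mathrel{\Box\!\!\!\rightarrow} q)\wedge(p\mathrel{\Box\!\!\!\rightarrow} r))$ and $(p\mathrel{\Box\!\!\!\rightarrow}\top)\leftrightarrow\top$, closed under uniform substitution, modus ponens and congruence rules for both arguments of $\mathrel{\Box\!\!\!\rightarrow}$. A conditional frame is $(X,\leq,\mathcal{R})$, $(X,\leq)$ a nonempty preorder, $\mathcal{R}=\{R_a\mid a\text{ an upset}\}$ with $(\leq\circ R_a)\subseteq(R_a\circ\leq)$; valuations assign upsets to letters and $x\models\phi\mathrel{\Box\!\!\!\rightarrow}\psi$ iff every $y$ with $xR_{V(\phi)}y$ satisfies $\psi$. ${\uparrow}x=\{y\mid x\leq y\}$. *)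

(* Defs.v *)
Inductive form : Type :=
  | Var : nat -> form
  | Bot : form
  | And : form -> form -> form
  | Or  : form -> form -> form
  | Imp : form -> form -> form
  | Cond : form -> form -> form.

Definition Top : form := Imp Bot Bot.
Definition Iff (a b : form) : form := And (Imp a b) (Imp b a).

Fixpoint subst (s : nat -> form) (f : form) : form :=
  match f with
  | Var n => s n
  | Bot => Bot
  | And a b => And (subst s a) (subst s b)
  | Or a b => Or (subst s a) (subst s b)
  | Imp a b => Imp (subst s a) (subst s b)
  | Cond a b => Cond (subst s a) (subst s b)
  end.

Inductive ICK (Gamma : form -> Prop) : form -> Prop :=
  | ax_K : forall a b, ICK Gamma (Imp a (Imp b a))
  | ax_S : forall a b c,
      ICK Gamma (Imp (Imp a (Imp b c)) (Imp (Imp a b) (Imp a c)))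
  | ax_andI : forall a b, ICK Gamma (Imp a (Imp b (And a b)))
  | ax_andE1 : forall a b, ICK Gamma (Imp (And a b) a)
  | ax_andE2 : forall a b, ICK Gamma (Imp (And a b) b)
  | ax_orI1 : forall a b, ICK Gamma (Imp a (Or a b))
  | ax_orI2 : forall a b, ICK Gamma (Imp b (Or a b))
  | ax_orE : forall a b c,
      ICK Gamma (Imp (Imp a c) (Imp (Imp b c) (Imp (Or a b) c)))
  | ax_botE : forall a, ICK Gamma (Imp Bot a)
  | ax_Gamma : forall a, Gamma a -> ICK Gamma a
  | ax_CondAnd :
      ICK Gamma (Iff (Cond (Var 0) (And (Var 1) (Var 2)))
                     (And (Cond (Var 0) (Var 1)) (Cond (Var 0) (Var 2))))
  | ax_CondTop : ICK Gamma (Iff (Cond (Var 0) Top) Top)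
  | r_subst : forall s a, ICK Gamma a -> ICK Gamma (subst s a)
  | r_MP : forall a b, ICK Gamma (Imp a b) -> ICK Gamma a -> ICK Gamma b
  | r_congL : forall a b c, ICK Gamma (Iff a b) ->
      ICK Gamma (Iff (Cond a c) (Cond b c))
  | r_congR : forall a b c, ICK Gamma (Iff a b) ->
      ICK Gamma (Iff (Cond c a) (Cond c b)).

Definition ax_ImpCond : form := Imp (Imp (Var 0) (Var 1)) (Cond (Var 0) (Var 1)).

Record cframe : Type := {
  cw :> Type;
  cle : cw -> cw -> Prop;
  (* R a, meant for upsets a (values on non-upsets are irrelevant) *)
  cR : (cw -> Prop) -> cw -> cw -> Prop
}.

Definition upset {X : Type} (le : X -> X -> Prop) (a : X -> Prop) : Prop :=
  forall x y, le x y -> a x -> a y.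

Definition is_cframe (F : cframe) : Prop :=
  inhabited (cw F) /\
  (forall x, cle F x x) /\
  (forall x y z, cle F x y -> cle F y z -> cle F x z) /\
  (forall a, upset (cle F) a ->
     forall x y z, cle F x y -> cR F a y z ->
       exists w, cR F a x w /\ cle F w z).

Definition valuation (F : cframe) : Type := nat -> cw F -> Prop.

Definition valid_val (F : cframe) (V : valuation F) : Prop :=
  forall n, upset (cle F) (V n).

Fixpoint sat (F : cframe) (V : valuation F) (x : cw F) (f : form) : Prop :=
  match f with
  | Var n => V n x
  | Bot => False
  | And a b => sat F V x a /\ sat F V x b
  | Or a b => sat F V x a \/ sat F V x b
  | Imp a b => forall y, cle F x y -> sat F V y a -> sat F V y b
  | Cond a b => forall y, cR F (fun z => sat F V z a) x y -> sat F V y b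
  end.

Definition frame_valid (F : cframe) (f : form) : Prop :=
  forall V : valuation F, valid_val F V -> forall x : cw F, sat F V x f.

Definition reflexive_cond (F : cframe) : Prop :=
  forall a, upset (cle F) a -> forall x y, cR F a x y -> cle F x y /\ a y.

(* Main.v *)
Require Import Defs.
From Stdlib Require Import Classical FunctionalExtensionality PropExtensionality Cantor Lia.

Section Snd.
Variable F : cframe.
Hypothesis HF : is_cframe F.
Hypothesis HR : reflexive_cond F.

Lemma refl_le : forall x, cle F x x. Proof. destruct HF as [_ [H _]]; exact H. Qed.
Lemma trans_le : forall x y z, cle F x y -> cle F y z -> cle F x z.
Proof. destruct HF as [_ [_ [H _]]]; exact H. Qed.
Lemma comm_le : forall a, upset (cle F) a ->
     forall x y z, cle F x y -> cR F a y z -> exists w, cR F a x w /\ cle F w z.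
Proof. destruct HF as [_ [_ [_ H]]]; exact H. Qed.

Lemma persist : forall V, valid_val F V -> forall f x y, cle F x y -> sat F V x f -> sat F V y f.
Proof.
  intros V HV f. induction f; simpl; intros x y Hxy H.
  - exact (HV n x y Hxy H).
  - exact H.
  - destruct H; split; eauto.
  - destruct H; [left|right]; eauto.
  - intros z Hyz Hz. apply H; [eapply trans_le; eauto | exact Hz].
  - intros z Hz.
    assert (Up : upset (cle F) (fun z => sat F V z f1)) by (intros u v; apply IHf1).
    destruct (comm_le _ Up x y z Hxy Hz) as [w [Hw1 Hw2]].
    eapply IHf2; [exact Hw2| apply H; exact Hw1].
Qed.

Lemma subst_lemma : forall V s f x,
  sat F V x (subst s f) <-> sat F (fun n z => sat F V z (s n)) x f.
Proof.
  intros V s f. induction f; simpl; intros x; try tauto.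
  - rewrite IHf1, IHf2; tauto.
  - rewrite IHf1, IHf2; tauto.
  - split; intros H y Hy Ha; apply IHf2; apply H; auto; apply IHf1; auto.
  - assert (E : (fun z => sat F V z (subst s f1)) = (fun z => sat F (fun n z => sat F V z (s n)) z f1)).
    { apply functional_extensionality; intro z; apply propositional_extensionality; apply IHf1. }
    rewrite E. split; intros H y Hy; apply IHf2; apply H; auto.
Qed.

End Snd.

Definition Thm := ICK (fun g => g = ax_ImpCond).

Lemma soundness : forall f, Thm f ->
  forall F : cframe, is_cframe F -> reflexive_cond F -> frame_valid F f.
Proof.
  intros f H. induction H; intros F HF HR V HV x; simpl.
  all: try solve [ intros; simpl in *; firstorder eauto using persist, refl_le, trans_le ].
  - intros y Hxy Ha z Hyz Hb. eapply persist; eauto.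
  - intros y Hxy Ha z Hyz Hb. split; [eapply persist; eauto | exact Hb].
  -
    subst a. simpl. intros y Hxy Himp z Hz.
    destruct (HR (fun z => V 0 z) (HV 0) y z Hz) as [Hyz Hv].
    apply Himp; auto.
  - apply subst_lemma. apply IHICK; auto.
    intros n u v Huv. apply persist; auto.
  - apply (IHICK1 F HF HR V HV x x (refl_le F HF x)). apply IHICK2; auto.
  - pose proof (IHICK F HF HR V HV) as E. simpl in E.
    assert (Eq : (fun z => sat F V z a) = (fun z => sat F V z b)).
    { apply functional_extensionality; intro z; apply propositional_extensionality.
      destruct (E z) as [E1 E2]. split; intro; [apply E1|apply E2]; auto; apply refl_le; auto. }
    split; intros y _ Hy; [rewrite <- Eq | rewrite Eq]; exact Hy.
  - pose proof (IHICK F HF HR V HV) as E. simpl in E.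
    split; intros y _ Hy z Hz; destruct (E z) as [E1 E2]; [apply E1|apply E2]; auto; apply refl_le; auto.
Qed.
Inductive DerI (G : form -> Prop) : form -> Prop :=
| d_thm : forall a, Thm a -> DerI G a
| d_hyp : forall a, G a -> DerI G a
| d_mp : forall a b, DerI G (Imp a b) -> DerI G a -> DerI G b.

Lemma thm_mp : forall a b, Thm (Imp a b) -> Thm a -> Thm b.
Proof. intros; eapply r_MP; eauto. Qed.

Lemma thm_id : forall a, Thm (Imp a a).
Proof.
  intro a. eapply thm_mp. eapply thm_mp. apply (ax_S _ a (Imp a a) a).
  apply ax_K. apply (ax_K _ a a).
Qed.

Lemma DerI_mono : forall (G H : form -> Prop), (forall a, G a -> H a) -> forall a, DerI G a -> DerI H a.
Proof. intros G H GH a D; induction D; [apply d_thm | apply d_hyp | eapply d_mp]; eauto. Qed.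

Lemma deduction : forall G a b, DerI (fun x => G x \/ x = a) b -> DerI G (Imp a b).
Proof.
  intros G a b D. induction D.
  - eapply d_mp. apply d_thm, ax_K. apply d_thm; auto.
  - destruct H as [H|H].
    + eapply d_mp. apply d_thm, ax_K. apply d_hyp; auto.
    + subst. apply d_thm, thm_id.
  - eapply d_mp. eapply d_mp. apply d_thm, ax_S. eauto. eauto.
Qed.

Lemma DerI_empty : forall a, DerI (fun _ => False) a -> Thm a.
Proof. intros a D; induction D; [auto|contradiction|eapply thm_mp; eauto]. Qed.

Lemma thm_of_der1 : forall a b, DerI (fun x => x = a) b -> Thm (Imp a b).
Proof.
  intros a b D. apply DerI_empty, deduction.
  eapply DerI_mono; [|exact D]. simpl; intros; auto.
Qed.

Lemma thm_trans : forall a b c, Thm (Imp a b) -> Thm (Imp b c) -> Thm (Imp a c).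
Proof.
  intros a b c H1 H2. apply thm_of_der1.
  eapply d_mp. apply d_thm, H2. eapply d_mp. apply d_thm, H1. apply d_hyp; auto.
Qed.

Lemma thm_iff : forall a b, Thm (Imp a b) -> Thm (Imp b a) -> Thm (Iff a b).
Proof. intros. unfold Iff. eapply thm_mp. eapply thm_mp. apply ax_andI. auto. auto. Qed.

Lemma thm_iff1 : forall a b, Thm (Iff a b) -> Thm (Imp a b).
Proof. intros. eapply thm_mp. apply ax_andE1. eauto. Qed.
Lemma thm_iff2 : forall a b, Thm (Iff a b) -> Thm (Imp b a).
Proof. intros. eapply thm_mp. apply ax_andE2. eauto. Qed.

Definition s2 (p q : form) : nat -> form :=
  fun n => match n with 0 => p | 1 => q | _ => Var n end.
Definition s3 (p q r : form) : nat -> form :=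
  fun n => match n with 0 => p | 1 => q | 2 => r | _ => Var n end.

Lemma thm_impcond : forall p q, Thm (Imp (Imp p q) (Cond p q)).
Proof.
  intros p q. change (Imp (Imp p q) (Cond p q)) with (subst (s2 p q) ax_ImpCond).
  apply r_subst, ax_Gamma; reflexivity.
Qed.

Lemma thm_condand : forall p q r, Thm (Iff (Cond p (And q r)) (And (Cond p q) (Cond p r))).
Proof.
  intros p q r.
  change (Iff (Cond p (And q r)) (And (Cond p q) (Cond p r))) with
   (subst (s3 p q r) (Iff (Cond (Var 0) (And (Var 1) (Var 2)))
                     (And (Cond (Var 0) (Var 1)) (Cond (Var 0) (Var 2))))).
  apply r_subst, ax_CondAnd.
Qed.

Lemma thm_condmono : forall p c d, Thm (Imp c d) -> Thm (Imp (Cond p c) (Cond p d)).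
Proof.
  intros p c d H.
  assert (E : Thm (Iff c (And c d))).
  { apply thm_iff.
    - apply thm_of_der1. eapply d_mp. eapply d_mp. apply d_thm, ax_andI.
      apply d_hyp; auto. eapply d_mp. apply d_thm, H. apply d_hyp; auto.
    - apply ax_andE1. }
  pose proof (r_congR _ _ _ p E) as E2.
  eapply thm_trans. apply thm_iff1, E2.
  eapply thm_trans. apply thm_iff1, thm_condand. apply ax_andE2.
Qed.

Definition pr (a b : nat) : nat := Cantor.to_nat (a, b).
Lemma pr_inj : forall a b c d, pr a b = pr c d -> a = c /\ b = d.
Proof.
  intros a b c d H. assert (E := f_equal Cantor.of_nat H). unfold pr in E.
  rewrite !Cantor.cancel_of_to in E. inversion E; auto.
Qed.

Fixpoint enc (f : form) : nat :=
  match f with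
  | Var n => pr 0 n
  | Bot => pr 1 0
  | And a b => pr 2 (pr (enc a) (enc b))
  | Or a b => pr 3 (pr (enc a) (enc b))
  | Imp a b => pr 4 (pr (enc a) (enc b))
  | Cond a b => pr 5 (pr (enc a) (enc b))
  end.

Lemma enc_inj : forall f g, enc f = enc g -> f = g.
Proof.
  induction f; destruct g; simpl; intro H; apply pr_inj in H; destruct H as [H1 H2];
    try discriminate; auto;
  try (apply pr_inj in H2; destruct H2 as [H2 H3]; f_equal; auto).
Qed.

Record ptheory (T : form -> Prop) : Prop := {
  pt_closed : forall a, DerI T a -> T a;
  pt_prime : forall a b, T (Or a b) -> T a \/ T b;
  pt_cons : ~ T Bot }.

Section Lind.
Variable G0 : form -> Prop.
Variable psi : form.
Hypothesis Hn : ~ DerI G0 psi.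

Fixpoint Gc (n : nat) : form -> Prop :=
  match n with
  | 0 => G0
  | S n => fun f => Gc n f \/ (enc f = n /\ ~ DerI (fun x => Gc n x \/ x = f) psi)
  end.

Lemma Gc_mono : forall n m, n <= m -> forall f, Gc n f -> Gc m f.
Proof. intros n m H; induction H; simpl; auto. Qed.

Lemma Gc_cons : forall n, ~ DerI (Gc n) psi.
Proof.
  induction n; simpl; auto.
  destruct (classic (exists f, enc f = n /\ ~ DerI (fun x => Gc n x \/ x = f) psi)) as [[f [Ef Hf]]|Hno].
  - intro D. apply Hf. eapply DerI_mono; [|exact D]. simpl.
    intros a [Ha|[Ea _]]; auto. right. apply enc_inj; congruence.
  - intro D. apply IHn. eapply DerI_mono; [|exact D]. simpl.
    intros a [Ha|Ha]; auto. exfalso; apply Hno; eauto.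
Qed.

Definition U (f : form) : Prop := exists n, Gc n f.

Lemma U_compact : forall a, DerI U a -> exists n, DerI (Gc n) a.
Proof.
  intros a D; induction D.
  - exists 0; apply d_thm; auto.
  - destruct H as [n Hn']; exists n; apply d_hyp; auto.
  - destruct IHD1 as [n1 H1], IHD2 as [n2 H2]. exists (n1 + n2).
    eapply d_mp; eapply DerI_mono; try eassumption; apply Gc_mono; lia.
Qed.

Lemma U_cons : ~ DerI U psi.
Proof. intro D. destruct (U_compact _ D) as [n Hd]. exact (Gc_cons n Hd). Qed.

Lemma U_max : forall a, ~ DerI (fun x => U x \/ x = a) psi -> U a.
Proof.
  intros a H. exists (S (enc a)). simpl. right. split; auto.
  intro D; apply H. eapply DerI_mono; [|exact D]. intros x [Hx|Hx]; [left; exists (enc a); auto|right; auto].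
Qed.

Lemma U_closed : forall a, DerI U a -> U a.
Proof.
  intros a D. apply U_max. intro D2. apply deduction in D2. apply U_cons. eapply d_mp; eauto.
Qed.

Lemma lindenbaum : exists T, ptheory T /\ (forall a, G0 a -> T a) /\ ~ T psi.
Proof.
  exists U. split; [split|split].
  - apply U_closed.
  - intros a b H. apply NNPP. intro Hno.
    assert (Da : DerI U (Imp a psi)).
    { apply deduction. apply NNPP. intro N. apply Hno; left; apply U_max; auto. }
    assert (Db : DerI U (Imp b psi)).
    { apply deduction. apply NNPP. intro N. apply Hno; right; apply U_max; auto. }
    apply U_cons. eapply d_mp. eapply d_mp. eapply d_mp. apply d_thm, ax_orE. exact Da. exact Db.
    apply d_hyp; auto.
  - intro H. apply U_cons. eapply d_mp. apply d_thm, ax_botE. apply d_hyp; auto.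
  - intros a H; exists 0; auto.
  - intro H; apply U_cons, d_hyp, H.
Qed.
End Lind.

Definition CW := { T : form -> Prop | ptheory T }.
Definition Cle (x y : CW) : Prop := forall a, proj1_sig x a -> proj1_sig y a.
Definition CR (A : CW -> Prop) (x y : CW) : Prop :=
  exists phi, (forall z, A z <-> proj1_sig z phi) /\ Cle x y /\ proj1_sig y phi /\
    (forall chi, proj1_sig x (Cond phi chi) -> proj1_sig y chi).
Definition CF : cframe := {| cw := CW; cle := Cle; cR := CR |}.
Definition CV : valuation CF := fun n z => proj1_sig z (Var n).

Lemma T_thm : forall (x : CW) a, Thm a -> proj1_sig x a.
Proof. intros [T HT] a H. apply (pt_closed _ HT), d_thm, H. Qed.
Lemma T_mp : forall (x : CW) a b, proj1_sig x (Imp a b) -> proj1_sig x a -> proj1_sig x b.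
Proof. intros [T HT] a b H1 H2. apply (pt_closed _ HT). eapply d_mp; apply d_hyp; eauto. Qed.

Lemma equiv_thm : forall a b, (forall z : CW, proj1_sig z a -> proj1_sig z b) -> Thm (Imp a b).
Proof.
  intros a b H. apply NNPP; intro N.
  assert (N2 : ~ DerI (fun x => x = a) b).
  { intro D; apply N, thm_of_der1, D. }
  destruct (lindenbaum _ _ N2) as [T [HT [H1 H2]]].
  apply H2. apply (H (exist _ T HT)). simpl. apply H1; auto.
Qed.

Lemma cond_lemma : forall (x : CW) phi psi,
  DerI (fun c => proj1_sig x c \/ c = phi \/ proj1_sig x (Cond phi c)) psi ->
  proj1_sig x (Cond phi psi).
Proof.
  intros x phi psi D. induction D.
  - apply T_thm. eapply thm_mp. apply thm_impcond. eapply thm_mp. apply ax_K. auto.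
  - destruct H as [H|[H|H]].
    + eapply T_mp. apply T_thm, thm_impcond. eapply T_mp. apply T_thm, ax_K. auto.
    + subst. apply T_thm. eapply thm_mp. apply thm_impcond. apply thm_id.
    + auto.
  - assert (H : proj1_sig x (Cond phi (And (Imp a b) a))).
    { eapply T_mp. apply T_thm, thm_iff2, thm_condand.
      eapply T_mp. eapply T_mp. apply T_thm, ax_andI. auto. auto. }
    eapply T_mp; [|exact H]. apply T_thm, thm_condmono.
    apply thm_of_der1. eapply d_mp. eapply d_mp. apply d_thm, ax_andE1. apply d_hyp; auto.
    eapply d_mp. apply d_thm, ax_andE2. apply d_hyp; auto.
Qed.

Lemma truth : forall f (z : CW), sat CF CV z f <-> proj1_sig z f.
Proof.
  induction f; intro z; simpl.
  - unfold CV; tauto.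
  - split; [tauto|]. destruct z as [T HT]; simpl. apply (pt_cons _ HT).
  - rewrite IHf1, IHf2. split.
    + intros [H1 H2]. eapply T_mp. eapply T_mp. apply T_thm, ax_andI. eauto. eauto.
    + intro H. split; eapply T_mp; try exact H; apply T_thm; [apply ax_andE1|apply ax_andE2].
  - rewrite IHf1, IHf2. split.
    + intros [H|H]; eapply T_mp; try exact H; apply T_thm; [apply ax_orI1|apply ax_orI2].
    + destruct z as [T HT]; simpl. apply (pt_prime _ HT).
  - split.
    + intro H. apply NNPP; intro N.
      assert (N2 : ~ DerI (fun x => proj1_sig z x \/ x = f1) f2).
      { intro D. apply N. destruct z as [T HT]. apply (pt_closed _ HT). apply deduction, D. }
      destruct (lindenbaum _ _ N2) as [T [HT [H1 H2]]].
      apply H2. apply (IHf2 (exist _ T HT)). apply H.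
      * intros a Ha. apply H1; auto.
      * apply IHf1. simpl. apply H1; auto.
    + intros H y Hy Ha. apply IHf2. apply IHf1 in Ha. eapply T_mp; [apply Hy, H|exact Ha].
  - split.
    + intro H. apply NNPP; intro N.
      assert (N2 : ~ DerI (fun c => proj1_sig z c \/ c = f1 \/ proj1_sig z (Cond f1 c)) f2).
      { intro D. apply N, cond_lemma, D. }
      destruct (lindenbaum _ _ N2) as [T [HT [H1 H2]]].
      apply H2. apply (IHf2 (exist _ T HT)). apply H.
      exists f1. split; [exact IHf1|]. split; [|split].
      * intros a Ha. apply H1; auto.
      * simpl. apply H1; auto.
      * intros chi Hc. simpl. apply H1; auto.
    + intros H y [phi [E [Hle [Hy Hc]]]]. apply IHf2. apply Hc.
      assert (Eq : Thm (Iff f1 phi)).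
      { apply thm_iff; apply equiv_thm; intros w Hw; [apply E, IHf1, Hw| apply IHf1, E, Hw]. }
      eapply T_mp; [|exact H]. apply T_thm, thm_iff1, r_congL, Eq.
Qed.

Lemma CF_frame : forall z : CW, is_cframe CF.
Proof.
  intro z0. split; [exact (inhabits z0)|]. split; [|split].
  - intros x a H; exact H.
  - intros x y z H1 H2 a H; auto.
  - intros A _ x y z Hxy [phi [E [Hle [Hy Hc]]]]. exists z. split.
    + exists phi. split; auto. split; [intros a Ha; auto|]. split; auto.
    + intros a H; exact H.
Qed.

Lemma CF_refl : reflexive_cond CF.
Proof.
  intros A _ x y [phi [E [Hle [Hy Hc]]]]. split; auto. apply E; auto.
Qed.

Theorem proposition5p6 :
  forall f : form,
    ICK (fun g => g = ax_ImpCond) f <->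
    (forall F : cframe, is_cframe F -> reflexive_cond F -> frame_valid F f).
Proof.
  intro f. split.
  - apply soundness.
  - intro H. apply NNPP; intro N.
    assert (N2 : ~ DerI (fun _ => False) f) by (intro D; apply N, DerI_empty, D).
    destruct (lindenbaum _ _ N2) as [T [HT [_ H2]]].
    apply H2. apply (truth f (exist _ T HT)).
    apply H. apply (CF_frame (exist _ T HT)). apply CF_refl.
    intros n x y Hxy Hx; apply Hxy, Hx.
Qed.
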